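(* The map $\phi:\mathfrak{S}_n\to\mathbf{I}_n$ (defined in the context) is such that for every $\pi\in\mathfrak{S}_n$, $$(\mathrm{exc},\mathrm{rlmin},\mathrm{lmaxz})(\pi)=(\mathrm{rep},\mathrm{rlmin},\mathrm{zero})(\phi(\pi)).$$
   Context: $\mathbf{I}_n=\{(e_1,\dots,e_n)\in\mathbb{N}^n:0\le e_i<i\}$ is the set of inversion sequences of length $n$. For $\pi=\pi_1\cdots\pi_n\in\mathfrak{S}_n$, $\phi(\pi)=(e_1,\dots,e_n)$ is defined by setting $e_n=\pi_n-1$ and then, for $i=n-1,n-2,\dots,1$: if $\pi_i\le i$, set $e_i=\pi_i-1$; otherwise ($\pi_i>i$), if $\pi_i$ is the $k$-th largest element of $\{\pi_1,\dots,\pi_i\}$, set $e_i$ to be the $k$-th smallest element of the set $\{e_j:i<j\le n\}$. Permutation statistics: $\mathrm{exc}(\pi)=|\{i\in[n-1]:\pi_i>i\}|$; $\mathrm{rlmin}(\pi)$ = number of $i$ with $\pi_i<\pi_j$ for all $j>i$; $\mathrm{lmaxz}(\pi)$ = one plus the number of left-to-right maxima of $\pi$ (letters greater than all letters to their left) occurring before the letter $1$. Inversion-sequence statistics: $\mathrm{dist}(e)=|\{e_1,\dots,e_n\}\setminus\{0\}|$; $\mathrm{rep}(e)=n-1-\mathrm{dist}(e)$; $\mathrm{rlmin}(e)=|\{i\in[n]:e_i<e_j\text{ for all }j>i\}|$; $\mathrm{zero}(e)=|\{i:e_i=0\}|$. *)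

(* Defs.v *)
From mathcomp Require Import all_boot all_fingroup.
Set Implicit Arguments. Unset Strict Implicit. Unset Printing Implicit Defensive.

(* Words are sequences of naturals, read 1-indexed: s_i := nth 0 s (i-1). *)

Definition perm_word (n : nat) (p : 'S_n) : seq nat :=
  [seq (p i).+1 | i <- enum 'I_n].

Definition at1 (s : seq nat) (i : nat) : nat := nth 0 s i.-1.

(* phi_suf w d = [:: e_(n-d+1); ...; e_n] where n = size w. *)
Fixpoint phi_suf (w : seq nat) (d : nat) : seq nat :=
  match d with
  | 0 => [::]
  | d'.+1 =>
    let s := phi_suf w d' in
    let i := size w - d' in
    let pi := at1 w i in
    let ei :=
      if d' == 0 then pi.-1
      else if pi <= i then pi.-1
      else
        (* pi is the k-th largest element of {pi_1,...,pi_i} *)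
        let k := count (fun x => pi <= x) (take i w) in
        nth 0 (sort leq (undup s)) k.-1
    in ei :: s
  end.

Definition phi (w : seq nat) : seq nat := phi_suf w (size w).

Definition exc (w : seq nat) : nat :=
  count (fun i => i < at1 w i) (iota 1 (size w).-1).

Definition rlmin (s : seq nat) : nat :=
  count (fun i => all (fun j => at1 s i < at1 s j) (iota i.+1 (size s - i)))
        (iota 1 (size s)).

Definition lmaxz (w : seq nat) : nat :=
  (count (fun i => all (fun j => at1 w j < at1 w i) (iota 1 i.-1))
         (iota 1 (index 1 w))).+1.

Definition dist (e : seq nat) : nat := size (undup [seq x <- e | x != 0]).
Definition rep (e : seq nat) : nat := (size e).-1 - dist e.
Definition zero (e : seq nat) : nat := count (pred1 0) e.

(* Main.v *)
Require Import Defs.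
From mathcomp Require Import all_boot all_fingroup zify.

Lemma map_at1_drop (s : seq nat) a :
  map (at1 s) (iota a.+1 (size s - a)) = drop a s.
Proof.
apply: (@eq_from_nth _ 0); first by rewrite size_map size_iota size_drop.
move=> j; rewrite size_map size_iota => hj.
rewrite (nth_map 0) ?size_iota // nth_iota // nth_drop /at1.
congr nth; lia.
Qed.

Lemma map_at1 (s : seq nat) : map (at1 s) (iota 1 (size s)) = s.
Proof. by have := map_at1_drop s 0; rewrite subn0 drop0. Qed.

Lemma count_le_iota n v : v <= n -> count (fun x => x <= v) (iota 1 n) = v.
Proof.
move=> hv; rewrite -(subnKC hv) iotaD count_cat.
rewrite (@eq_in_count _ _ predT) ?count_predT ?size_iota; last first.
  move=> x; rewrite mem_iota => /andP[_ h] /=; suff: x <= v by move=> ->.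
  lia.
rewrite (@eq_in_count _ _ pred0) ?count_pred0 ?addn0 //.
move=> x; rewrite mem_iota => /andP[h _] /=; apply/negbTE; rewrite -ltnNge; lia.
Qed.

Set Implicit Arguments. Unset Strict Implicit.

Definition Ef (w s : seq nat) (d' : nat) : nat :=
    let i := size w - d' in
    let pi := at1 w i in
    if d' == 0 then pi.-1
      else if pi <= i then pi.-1
      else nth 0 (sort leq (undup s)) (count (fun x => pi <= x) (take i w)).-1.

Lemma phi_sufS w d : phi_suf w d.+1 = Ef w (phi_suf w d) d :: phi_suf w d.
Proof. by []. Qed.

Lemma size_phi_suf w d : size (phi_suf w d) = d.
Proof. by elim: d => //= d ->. Qed.

Lemma drop_phi_suf w m d : drop m (phi_suf w (m + d)) = phi_suf w d.
Proof. by elim: m => [|m IH]; rewrite ?drop0 // addSn phi_sufS /= IH. Qed.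

Lemma drop_phi w i : i <= size w -> drop i (phi w) = phi_suf w (size w - i).
Proof. by move=> hi; rewrite /phi -{1}(subnKC hi) drop_phi_suf. Qed.

Lemma at1_phi w i : 0 < i <= size w ->
  at1 (phi w) i = Ef w (phi_suf w (size w - i)) (size w - i).
Proof.
move=> /andP[h1 h2].
have := drop_phi (w:=w) (i:=i.-1) (leq_trans (leq_pred i) h2).
have -> : size w - i.-1 = (size w - i).+1 by lia.
rewrite phi_sufS /at1 => H.
by rewrite -[i.-1]addn0 -nth_drop H.
Qed.

Definition NE (w : seq nat) j := (j == size w) || (at1 w j <= j).

Lemma Ef_NE w s i : 0 < i <= size w -> NE w i ->
  Ef w s (size w - i) = (at1 w i).-1.
Proof.
move=> hi; rewrite /NE /Ef.
have -> : size w - (size w - i) = i by lia.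
case: eqP => [->|_]; first by rewrite subnn.
by move=> /= ->; case: eqP.
Qed.

Lemma Ef_exc w s i : i < size w -> i < at1 w i ->
  Ef w s (size w - i) =
  nth 0 (sort leq (undup s)) (count (fun x => at1 w i <= x) (take i w)).-1.
Proof.
move=> hi hp; rewrite /Ef.
have -> : size w - (size w - i) = i by lia.
have -> : (size w - i == 0) = false by apply/eqP; lia.
by rewrite leqNgt hp.
Qed.

Lemma mem_map_filter (f : nat -> nat) (p : pred nat) l x :
  (x \in [seq f j | j <- l & p j]) = has (fun j => p j && (f j == x)) l.
Proof.
elim: l => //= a l IH; case: (p a) => //=; rewrite in_cons IH.
by rewrite eq_sym.
Qed.

Section W.
End W.

Lemma w_uniq w : perm_eq w (iota 1 (size w)) -> uniq w.
Proof. by move=> Hw; rewrite (perm_uniq Hw) iota_uniq. Qed.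

Lemma pi_range w j : perm_eq w (iota 1 (size w)) -> 0 < j <= size w ->
  0 < at1 w j <= size w.
Proof.
move=> Hw hj; have: at1 w j \in w by apply: mem_nth; lia.
by rewrite (perm_mem Hw) mem_iota; lia.
Qed.

Lemma pi_inj w j1 j2 : perm_eq w (iota 1 (size w)) ->
  0 < j1 <= size w -> 0 < j2 <= size w -> at1 w j1 = at1 w j2 -> j1 = j2.
Proof.
move=> Hw h1 h2 /eqP; rewrite /at1 nth_uniq; first (move/eqP; lia).
- lia.
- lia.
- exact: w_uniq Hw.
Qed.

Lemma count_w_le w v : perm_eq w (iota 1 (size w)) -> v <= size w ->
  count (fun x => x <= v) w = v.
Proof. by move=> Hw hv; rewrite (seq.permP Hw) count_le_iota. Qed.

Lemma count_in_le (a b : pred nat) l :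
  {in l, forall x, a x -> b x} -> count a l <= count b l.
Proof.
elim: l => //= x l IH H.
have := IH (fun y hy => H y (mem_behead (s:=x::l) hy)).
have := H x (mem_head x l).
case: (a x); case: (b x) => //= h; try lia.

Qed.

Lemma counting w i : perm_eq w (iota 1 (size w)) -> i < size w -> i < at1 w i ->
  count (fun x => at1 w i <= x) (take i w) <=
  count (NE w) (iota i.+1 (size w - i)).
Proof.
move=> Hw hi hp.
apply: (@leq_trans (count (predC (fun x => x <= i)) (take i w))).
  by apply: sub_count => x /= h; rewrite -ltnNge; lia.
have h1 := count_predC (fun x => x <= i) (take i w).
have h2 := count_w_le Hw (ltnW hi).
rewrite -(cat_take_drop i w) count_cat in h2.
rewrite size_take hi in h1.
apply: (@leq_trans (count (fun x => x <= i) (drop i w))); first lia.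
rewrite -map_at1_drop count_map.
apply: count_in_le => j; rewrite mem_iota /NE /= => hj h.
apply/orP; right; lia.
Qed.

Lemma Ef_NE' w s d : d < size w -> NE w (size w - d) ->
  Ef w s d = (at1 w (size w - d)).-1.
Proof.
move=> hd h; have := @Ef_NE w s (size w - d) ltac:(lia) h.
by have -> : size w - (size w - d) = d by lia.
Qed.

Lemma Ef_exc' w s d : 0 < d < size w -> size w - d < at1 w (size w - d) ->
  Ef w s d = nth 0 (sort leq (undup s))
     (count (fun x => at1 w (size w - d) <= x) (take (size w - d) w)).-1.
Proof.
move=> hd h; have := @Ef_exc w s (size w - d) ltac:(lia) h.
by have -> : size w - (size w - d) = d by lia.
Qed.

Definition Mem w d := forall x, (x \in phi_suf w d) =
   has (fun j => NE w j && ((at1 w j).-1 == x)) (iota (size w - d).+1 d).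

Lemma Card w d : perm_eq w (iota 1 (size w)) -> d <= size w -> Mem w d ->
  size (undup (phi_suf w d)) = count (NE w) (iota (size w - d).+1 d).
Proof.
move=> Hw hd HM.
set t := [seq (at1 w j).-1 | j <- iota (size w - d).+1 d & NE w j].
have ut : uniq t.
  rewrite map_inj_in_uniq ?filter_uniq ?iota_uniq //.
  move=> j1 j2; rewrite !mem_filter !mem_iota => /andP[_ h1] /andP[_ h2] e.
  have r1 := @pi_range w j1 Hw ltac:(lia).
  have r2 := @pi_range w j2 Hw ltac:(lia).
  apply: (pi_inj Hw); lia.
have : perm_eq (undup (phi_suf w d)) t.
  apply: uniq_perm => //; first exact: undup_uniq.
  by move=> x; rewrite mem_undup HM mem_map_filter.
by move/perm_size ->; rewrite size_map size_filter.
Qed.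

Lemma MemP w d : perm_eq w (iota 1 (size w)) -> d <= size w -> Mem w d.
Proof.
move=> Hw; elim: d => [|d IH] hd x; first by rewrite /= in_nil.
have IHd := IH (ltnW hd).
rewrite phi_sufS in_cons IHd.
have -> : (size w - d.+1).+1 = size w - d by lia.
rewrite [iota _ d.+1]/=.
case hN: (NE w (size w - d)).
  by rewrite (Ef_NE' _ hd hN) /= eq_sym hN.
rewrite /= hN /=.
have hd0 : 0 < d.
  case: d {IH IHd} hd hN => // _; rewrite /NE subn0 eqxx //.
move: hN; rewrite /NE => /norP [hn hp]; rewrite -ltnNge in hp.
have h01 : 0 < d < size w by lia.
rewrite (@Ef_exc' w (phi_suf w d) d h01 hp).
set i := size w - d in hp hn *.
set k := count _ _.
have hi : i < size w by rewrite /i; lia.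
have hc := @counting w i Hw hi hp.
have hid : size w - i = d by rewrite /i; lia.
rewrite hid in hc.
have hC : 0 < count (NE w) (iota i.+1 d).
  rewrite -has_count; apply/hasP; exists (size w).
    rewrite mem_iota; rewrite /i; lia.
  by rewrite /NE eqxx.
have hm : nth 0 (sort leq (undup (phi_suf w d))) k.-1 \in phi_suf w d.
  rewrite -mem_undup -(mem_sort leq); apply: mem_nth.
  rewrite size_sort (Card Hw (ltnW hd) IHd).
  have -> : (size w - d).+1 = i.+1 by [].
  have hk : k <= count (NE w) (iota i.+1 d) := hc. lia.
case: (x =P _) => [->|_] /=; last by [].
by rewrite -IHd.
Qed.

Lemma map_at1_take (s : seq nat) i : i <= size s ->
  map (at1 s) (iota 1 i) = take i s.
Proof.
move=> hi; apply: (@eq_from_nth _ 0); first by rewrite size_map size_iota size_take_min; lia.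
move=> j; rewrite size_map size_iota => hj.
rewrite (nth_map 0) ?size_iota // nth_iota // nth_take // /at1; try (congr nth; lia).
Qed.

Lemma size_phi w : size (phi w) = size w.
Proof. exact: size_phi_suf. Qed.

Lemma MemE w i x : perm_eq w (iota 1 (size w)) -> i <= size w ->
  (x \in drop i (phi w)) =
  has (fun j => NE w j && ((at1 w j).-1 == x)) (iota i.+1 (size w - i)).
Proof.
move=> Hw hi; rewrite drop_phi // MemP //; last by rewrite leq_subr.
by have -> : size w - (size w - i) = i by lia.
Qed.

Lemma e_NE w i : 0 < i <= size w -> NE w i -> at1 (phi w) i = (at1 w i).-1.
Proof. by move=> hi hN; rewrite at1_phi // Ef_NE. Qed.

Lemma e_exc w i : perm_eq w (iota 1 (size w)) -> 0 < i < size w -> i < at1 w i ->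
  let L := sort leq (undup (drop i (phi w))) in
  let k := count (fun x => at1 w i <= x) (take i w) in
  at1 (phi w) i = nth 0 L k.-1 /\ k.-1 < size L.
Proof.
move=> Hw hi hp L k.
have hi' : i <= size w by lia.
split.
  have h0 : 0 < i <= size w by lia.
  have h1 : i < size w by lia.
  by rewrite (at1_phi h0) (Ef_exc _ h1 hp) /L drop_phi.
have hs : size w - i <= size w by rewrite leq_subr.
rewrite /L size_sort drop_phi // (Card Hw hs (MemP Hw hs)).
have -> : size w - (size w - i) = i by lia.
have h1 : i < size w by lia.
have hc := @counting w i Hw h1 hp.
have hC : 0 < count (NE w) (iota i.+1 (size w - i)).
  rewrite -has_count; apply/hasP; exists (size w).
    rewrite mem_iota; lia.
  by rewrite /NE eqxx.
have hk : k <= count (NE w) (iota i.+1 (size w - i)) := hc.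
lia.
Qed.

Lemma e_exc_mem w i : perm_eq w (iota 1 (size w)) -> 0 < i < size w -> i < at1 w i ->
  at1 (phi w) i \in drop i (phi w).
Proof.
move=> Hw hi hp; have [-> h] := e_exc Hw hi hp.
by rewrite -mem_undup -(mem_sort leq); apply: mem_nth.
Qed.

Lemma one_pos w : perm_eq w (iota 1 (size w)) -> 0 < size w ->
  let q := index 1 w in q < size w /\ at1 w q.+1 = 1.
Proof.
move=> Hw hn q.
have h1 : 1 \in w by rewrite (perm_mem Hw) mem_iota; lia.
split; first by rewrite index_mem.
by rewrite /at1 /= nth_index.
Qed.

Lemma zero_in w : perm_eq w (iota 1 (size w)) -> 0 < size w -> 0 \in phi w.
Proof.
move=> Hw hn; have [hq hp] := one_pos Hw hn.
rewrite -(drop0 (phi w)) MemE //; apply/hasP; exists (index 1 w).+1.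
  rewrite mem_iota; lia.
by rewrite /NE hp /= orbT.
Qed.

Lemma rep_phi w : perm_eq w (iota 1 (size w)) -> 0 < size w ->
  rep (phi w) = exc w.
Proof.
move=> Hw hn.
set n := size w.
have hz := zero_in Hw hn.
set u := undup (phi w).
have hu : size u = count (NE w) (iota 1 n).
  have := Card Hw (leqnn n) (MemP Hw (leqnn n)).
  by rewrite subnn.
have h0 : count (pred1 0) u = 1.
  by rewrite (count_uniq_mem _ (undup_uniq _)) mem_undup hz.
have hc := count_predC (pred1 0) u.
have e1 : count (predC (pred1 0)) u = count (fun x => x != 0) u := erefl.
have hd : dist (phi w) = count (NE w) (iota 1 n) - 1.
  rewrite /dist -filter_undup size_filter -/u -e1; lia.
have hsplit : iota 1 n = iota 1 n.-1 ++ [:: n].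
  rewrite [in LHS](_ : n = n.-1 + 1); last lia.
  by rewrite iotaD add1n /= prednK.
have hNE : count (NE w) (iota 1 n) = count (NE w) (iota 1 n.-1) + 1.
  by rewrite hsplit count_cat /= /NE eqxx.
have hNE2 : count (NE w) (iota 1 n.-1) =
            count (predC (fun i => i < at1 w i)) (iota 1 n.-1).
  apply: eq_in_count => i; rewrite mem_iota => hi.
  rewrite /NE /= -leqNgt.
  have -> : (i == n) = false by apply/eqP; lia.
  by [].
have hc2 := count_predC (fun i => i < at1 w i) (iota 1 n.-1).
rewrite size_iota in hc2.
rewrite /rep size_phi hd /exc -/n.
lia.
Qed.

Lemma rlmin_alt s : rlmin s =
  count (fun i => all (fun y => at1 s i < y) (drop i s)) (iota 1 (size s)).
Proof.
apply: eq_in_count => i _ /=; by rewrite -map_at1_drop all_map.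
Qed.

Lemma at1_in_drop w i j : i < j <= size w -> at1 w j \in drop i w.
Proof.
move=> h; rewrite -map_at1_drop; apply: map_f; rewrite mem_iota; lia.
Qed.

Lemma rlmin_pt w i : perm_eq w (iota 1 (size w)) -> 0 < i <= size w ->
  all (fun y => at1 w i < y) (drop i w) =
  all (fun y => at1 (phi w) i < y) (drop i (phi w)).
Proof.
move=> Hw hi.
have Esz : @size nat w = size w := erefl.
have hpi := pi_range Hw hi.
apply/idP/idP => H.
- have hNE : NE w i.
    rewrite /NE; apply/orP; right.
    have hv : at1 w i <= size w by lia.
    have hc := count_w_le Hw hv.
    have hcc := count_cat (fun x => x <= at1 w i) (take i w) (drop i w).
    rewrite cat_take_drop hc in hcc.
    have h0 : count (fun x => x <= at1 w i) (drop i w) = 0.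
      apply/eqP; rewrite -leqn0 leqNgt -has_count; apply/hasPn => y hy.
      move/allP: H => /(_ y hy) /=; rewrite -ltnNge //.
    have := count_size (fun x => x <= at1 w i) (take i w).
    rewrite size_take_min; lia.
  have hi3 : i <= size w by lia.
  rewrite e_NE //; apply/allP => y; rewrite MemE //.
  move=> /hasP[j hj /andP[_ /eqP <-]].
  move: hj; rewrite mem_iota => hj.
  have hj' : 0 < j <= size w by lia.
  have hpj := pi_range Hw hj'.
  have : at1 w j \in drop i w by apply: at1_in_drop; apply/andP; split; [lia | case/andP: hj'].
  move/allP: H => H /H /=; lia.
- case: (ltnP i (size w)) => hin; last first.
    by rewrite drop_oversize.
  case hN: (NE w i); last first.
    move: hN; rewrite /NE => /norP[_]; rewrite -ltnNge => hp.
    have hi2 : 0 < i < size w by lia.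
    have hm := e_exc_mem Hw hi2 hp.
    by move/allP: H => /(_ _ hm); rewrite ltnn.
  move: (hN); rewrite /NE => /orP[/eqP|] hle; first by rewrite hle ltnn in hin.
  rewrite e_NE // in H.
  apply/allP => y; rewrite -map_at1_drop => /mapP[j hj ->] /=.
  move: hj; rewrite mem_iota => hj.
  have hj' : 0 < j <= size w by lia.
  have hpj := pi_range Hw hj'.
  case hNj: (NE w j).
    have : (at1 w j).-1 \in drop i (phi w).
      rewrite MemE //; last lia.
      apply/hasP; exists j; first by rewrite mem_iota.
      by rewrite hNj eqxx.
    move/allP: H => H /H /=; lia.
  move: hNj; rewrite /NE => /norP[_]; rewrite -ltnNge; lia.
Qed.

Lemma rlmin_phi w : perm_eq w (iota 1 (size w)) -> rlmin (phi w) = rlmin w.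
Proof.
move=> Hw; have Esz : @size nat w = size w := erefl.
rewrite !rlmin_alt size_phi; apply: eq_in_count => i.
rewrite mem_iota => hi; rewrite /= -(rlmin_pt Hw) //; lia.
Qed.

Definition LR (w : seq nat) i := all (fun j => at1 w j < at1 w i) (iota 1 i.-1).

Lemma LR_big w i : perm_eq w (iota 1 (size w)) -> 0 < size w ->
  0 < i < (index 1 w).+1 -> LR w i -> i < at1 w i.
Proof.
move=> Hw hn hi H.
have Esz : @size nat w = size w := erefl.
have [hq hp1] := one_pos Hw hn.
have hin : i <= size w by lia.
have hpi : 0 < at1 w i <= size w by apply: pi_range; lia.
have hu : uniq (take i w) by apply: take_uniq; apply: w_uniq.
have hsub : {subset take i w <= iota 2 (at1 w i).-1}.
  move=> x; rewrite -map_at1_take // => /mapP[j hj ->].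
  move: hj; rewrite mem_iota => hj.
  have hj' : 0 < j <= size w by lia.
  have hpj := pi_range Hw hj'.
  have hne : at1 w j != 1.
    apply/eqP => e; rewrite -hp1 in e.
    have hp' : 0 < (index 1 w).+1 <= size w by lia.
    have := pi_inj Hw hj' hp' e; lia.
  have hle : at1 w j <= at1 w i.
    case: (ltnP j i) => hji; last by have -> : j = i by lia.
    move/allP: H => /(_ j); rewrite mem_iota => /(_ ltac:(lia)); lia.
  rewrite mem_iota; move: hne => /eqP hne; lia.
have := uniq_leq_size hu hsub.
rewrite size_take_min size_iota; lia.
Qed.

Lemma zero_phi w : perm_eq w (iota 1 (size w)) -> 0 < size w ->
  zero (phi w) = lmaxz w.
Proof.
move=> Hw hn.
have Esz : @size nat w = size w := erefl.
have [hq hp1] := one_pos Hw hn.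
set q := index 1 w in hq hp1 *.
set n := size w in hq hn Esz *.
have En1 : n = size w := erefl.
have En2 : n = @size nat w := erefl.
have hpNE : NE w q.+1 by rewrite /NE hp1; apply/orP; right.
have hpr : 0 < q.+1 <= n by lia.
have Z : zero (phi w) = count (fun i => at1 (phi w) i == 0) (iota 1 n).
  by rewrite /zero -{1}[phi w]map_at1 count_map size_phi.
have hsplit : iota 1 n = iota 1 q ++ q.+1 :: iota q.+2 (n - q.+1).
  rewrite [in LHS](_ : n = q + (n - q)); last lia.
  rewrite iotaD add1n; congr (_ ++ _).
  by rewrite (_ : n - q = (n - q.+1).+1) //; lia.
rewrite Z hsplit count_cat /= (e_NE hpr hpNE) hp1 /=.
have c3 : count (fun i => at1 (phi w) i == 0) (iota q.+2 (n - q.+1)) = 0.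
  apply/eqP; rewrite -leqn0 leqNgt -has_count; apply/hasPn => i.
  rewrite mem_iota => hi; apply/negP => /eqP hz.
  have hi' : 0 < i <= n by lia.
  have hpi := pi_range Hw hi'.
  case hN: (NE w i).
    rewrite e_NE // in hz.
    have e : at1 w i = at1 w q.+1 by rewrite hp1; lia.
    have := pi_inj Hw hi' hpr e; lia.
  move: hN; rewrite /NE => /norP[hin]; rewrite -ltnNge => hp.
  have hi2 : 0 < i < size w by move/eqP: hin; lia.
  have := e_exc_mem Hw hi2 hp; rewrite hz MemE //; last lia.
  move=> /hasP[j]; rewrite mem_iota => hj /andP[_ /eqP hj1].
  have hj' : 0 < j <= n by lia.
  have hpj := pi_range Hw hj'.
  have e : at1 w j = at1 w q.+1 by rewrite hp1; lia.
  have := pi_inj Hw hj' hpr e; lia.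
rewrite c3 /lmaxz -/q /= addn0 addn1; congr (_.+1).
apply: eq_in_count => i; rewrite mem_iota => hi.
have hi' : 0 < i <= n by lia.
have hpi := pi_range Hw hi'.
have hne1 : at1 w i != 1.
  apply/eqP => e; rewrite -hp1 in e.
  have := pi_inj Hw hi' hpr e; lia.
case hN: (NE w i).
  rewrite e_NE //=.
  have -> : ((at1 w i).-1 == 0) = false by apply/eqP; move/eqP: hne1; lia.
  apply/esym/negP => HL.
  have hi3 : 0 < i < (index 1 w).+1 by lia.
  have := LR_big Hw hn hi3 HL.
  move: hN; rewrite /NE => /orP[/eqP|]; lia.
move: hN; rewrite /NE => /norP[hin]; rewrite -ltnNge => hp.
have hi2 : 0 < i < size w by lia.
have [-> hk] := e_exc Hw hi2 hp.
set L := sort leq (undup _) in hk *.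
set k := count _ _ in hk *.
have hsL : sorted ltn L.
  by rewrite ltn_sorted_uniq_leq sort_uniq undup_uniq sort_sorted //; apply: leq_total.
have h0L : 0 \in L.
  rewrite mem_sort mem_undup MemE //; last lia.
  apply/hasP; exists q.+1; first by rewrite mem_iota; lia.
  by rewrite hpNE hp1.
have hs0 : 0 < size L by case: (L) h0L.
have hn0 : nth 0 L 0 = 0.
  have hx := nth_index 0 h0L.
  have hix : index 0 L < size L by rewrite index_mem.
  case hI: (index 0 L) hx hix => [|m] hx hix; first by [].
  have := @sorted_ltn_nth _ _ ltn_trans 0 L hsL 0 m.+1.
  rewrite !inE => /(_ hs0 hix isT); rewrite hx.
  by [].
have -> : (nth 0 L k.-1 == 0) = (k.-1 == 0).
  case hk0: (k.-1) => [|m]; first by rewrite hn0 eqxx.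
  have := @sorted_ltn_nth _ _ ltn_trans 0 L hsL 0 m.+1.
  rewrite !inE -hk0 => /(_ hs0 hk); rewrite hk0 => /(_ isT); rewrite hn0 -hk0.
  move=> h; have -> : (k.-1 == 0) = false by rewrite hk0.
  by apply/eqP; lia.
have hkc : k = count (fun j => at1 w i <= at1 w j) (iota 1 i.-1) + 1.
  rewrite /k -map_at1_take; last lia.
  rewrite count_map.
  have hs : iota 1 i = iota 1 i.-1 ++ [:: i].
    rewrite [in LHS](_ : i = i.-1 + 1); last lia.
    by rewrite iotaD add1n /= prednK //; lia.
  by rewrite hs count_cat /= leqnn addn0.
rewrite hkc addn1 /= /LR.
rewrite eqn0Ngt -has_count -all_predC.
by apply: eq_all => j /=; rewrite ltnNge.
Qed.

Lemma perm_word_ok n (p : 'S_n) :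
  perm_eq (perm_word p) (iota 1 (size (perm_word p))).
Proof.
rewrite /perm_word size_map size_enum_ord.
have -> : [seq (p i).+1 | i <- enum 'I_n] = map (fun i : 'I_n => (val i).+1) (map p (enum 'I_n)).
  by elim: (enum 'I_n) => //= a l ->.
have -> : iota 1 n = map (fun i : 'I_n => (val i).+1) (enum 'I_n).
  rewrite map_comp val_enum_ord.
  have -> : iota 1 n = iota (1 + 0) n by [].
  rewrite iotaDl; apply: eq_map => x; by rewrite add1n.
apply: perm_map; apply: uniq_perm.
- by rewrite map_inj_uniq ?enum_uniq //; apply: perm_inj.
- exact: enum_uniq.
- move=> x; rewrite mem_enum; apply/mapP; exists (p^-1 x)%g; first by rewrite mem_enum.
  by rewrite permKV.
Qed.

Theorem lemma4p1 (n : nat) (hn : 0 < n) (p : 'S_n) :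
  (exc (perm_word p), rlmin (perm_word p), lmaxz (perm_word p)) =
  (rep (phi (perm_word p)), rlmin (phi (perm_word p)), zero (phi (perm_word p))).
Proof.
have Hw := perm_word_ok p.
have hs : 0 < size (perm_word p) by rewrite /perm_word size_map size_enum_ord.
by rewrite rep_phi // rlmin_phi // zero_phi.
Qed.
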